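(* Let $\mathbb{X}$ be a real Banach space such that $\operatorname{Sm}\mathbb{X}$ is a dense $G_\delta$ subset of $\mathbb{X}$, and let $H=\{x\in\mathbb{X}:\varphi(x)=c\}$ be a hyperplane not passing through the origin (with $\varphi$ a non-zero bounded linear functional and $c\neq0$). If a bounded linear operator $T:\mathbb{X}\to\mathbb{X}$ preserves Birkhoff–James orthogonality at each point of $H$, then $T$ is a scalar multiple of an isometry.
   Context: $u\perp_B v$ means $\|u+\lambda v\|\ge\|u\|$ for all real $\lambda$. $T$ preserves Birkhoff–James orthogonality at $x$ if $x\perp_B v$ implies $Tx\perp_B Tv$ for all $v$. For non-zero $z$, $J(z)=\{f\in\mathbb{X}^*:\|f\|=1,\ f(z)=\|z\|\}$; $z$ is smooth if $J(z)$ is a singleton; $\operatorname{Sm}\mathbb{X}$ is the set of smooth points. ''Scalar multiple of an isometry'': there is $\lambda\ge0$ with $\|Tx\|=\lambda\|x\|$ for all $x$. *)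

(* Defs.v *)
From HB Require Import structures.
From mathcomp Require Import all_boot all_order all_algebra.
From mathcomp Require Import all_classical all_reals all_analysis.
From mathcomp Require Import borel_hierarchy.
Set Implicit Arguments. Unset Strict Implicit. Unset Printing Implicit Defensive.
Import Order.TTheory GRing.Theory Num.Theory numFieldNormedType.Exports.
Local Open Scope classical_set_scope.
Local Open Scope ring_scope.

Definition BJ_orth {R : realType} {X : normedModType R} (u v : X) : Prop :=
  forall l : R, `|u| <= `|u + l *: v|.

Definition preserves_BJ_at {R : realType} {X : normedModType R}
  (T : X -> X) (x : X) : Prop :=
  forall v : X, BJ_orth x v -> BJ_orth (T x) (T v).

Definition is_linear_fun {R : realType} {X Y : normedModType R} (f : X -> Y) : Prop :=
  forall (a : R) (x y : X), f (a *: x + y) = a *: f x + f y.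

Definition bounded_linear {R : realType} {X Y : normedModType R} (f : X -> Y) : Prop :=
  is_linear_fun f /\ continuous f.

Definition functional_norm {R : realType} {X : normedModType R} (f : X -> R) : R :=
  sup [set `|f x| | x in [set x : X | `|x| <= 1]].

Definition Jset {R : realType} {X : normedModType R} (z : X) : set (X -> R) :=
  [set f | bounded_linear (f : X -> R^o) /\ functional_norm f = 1 /\ f z = `|z|].

Definition smooth_point {R : realType} {X : normedModType R} (z : X) : Prop :=
  z <> 0 /\ exists f : X -> R, Jset z = [set f].

Definition Sm {R : realType} (X : normedModType R) : set X :=
  [set z | smooth_point z].
Arguments Sm {R} X.

Definition scalar_mult_isometry {R : realType} {X : normedModType R} (T : X -> X) : Prop :=
  exists l : R, 0 <= l /\ forall x : X, `|T x| = l * `|x|.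

(* Main.v *)
Require Import Defs.
From HB Require Import structures.
From mathcomp Require Import all_boot all_order all_algebra.
From mathcomp Require Import all_classical all_reals all_analysis.
From mathcomp Require Import borel_hierarchy.
From mathcomp Require Import ring lra.
From mathcomp Require Import ring lra.
Import Order.TTheory GRing.Theory Num.Theory numFieldNormedType.Exports.
Local Open Scope classical_set_scope.
Local Open Scope ring_scope.
Set Implicit Arguments. Unset Strict Implicit.

Lemma L1 (R : realType) (X : normedModType R) (u w : X) (s t : R) :
  0 < s -> s <= t ->
  t * (`|u + s *: w| - `|u|) <= s * (`|u + t *: w| - `|u|).
Proof.
move=> s0 st.
have t0 : 0 < t by apply: lt_le_trans st.
have E : t *: (u + s *: w) = (t - s) *: u + s *: (u + t *: w).
  rewrite !scalerDr !scalerA scalerBl (mulrC t s) addrA; congr (_ + _).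
  by rewrite subrK.
have := ler_normD ((t - s) *: u) (s *: (u + t *: w)).
rewrite -E !normrZ (gtr0_norm t0) (gtr0_norm s0) ger0_norm ?subr_ge0 //.
lra.
Qed.

Lemma L2 (R : realType) (X : normedModType R) (u w : X) (sg s : R) :
  sg < 0 -> 0 < s ->
  sg * (`|u + s *: w| - `|u|) <= s * (`|u + sg *: w| - `|u|).
Proof.
move=> sg0 s0.
have E : (s - sg) *: u = s *: (u + sg *: w) + (- sg) *: (u + s *: w).
  rewrite !scalerDr !scalerA scalerBl (mulrC s sg) !mulNr !scaleNr.
  by rewrite addrACA subrr addr0.
have := ler_normD (s *: (u + sg *: w)) ((- sg) *: (u + s *: w)).
rewrite -E !normrZ (gtr0_norm s0) normrN (ltr0_norm sg0) gtr0_norm ?subr_gt0 ?(lt_trans sg0 s0) //.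
lra.
Qed.

Definition qset (R : realType) (X : normedModType R) (u w : X) : set R :=
  [set (`|u + s *: w| - `|u|) / s | s in [set s : R | 0 < s]].
Definition dd (R : realType) (X : normedModType R) (u w : X) : R := inf (qset u w).

Lemma qset_lb (R : realType) (X : normedModType R) (u w : X) :
  lbound (qset u w) (- `|w|).
Proof.
move=> _ [s /= s0 <-]; rewrite ler_pdivlMr //.
have := ler_normB (u + s *: w) (s *: w); rewrite addrK normrZ gtr0_norm //.
lra.
Qed.

Lemma qset_ne (R : realType) (X : normedModType R) (u w : X) : qset u w !=set0.
Proof. by exists ((`|u + 1 *: w| - `|u|) / 1); exists 1 => //=; rewrite ltr01. Qed.

Lemma dd_le (R : realType) (X : normedModType R) (u w : X) (s : R) :
  0 < s -> s * dd u w <= `|u + s *: w| - `|u|.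
Proof.
move=> s0; have : dd u w <= (`|u + s *: w| - `|u|) / s.
  apply: ge_inf; first by exists (- `|w|); apply: qset_lb.
  by exists s.
by rewrite ler_pdivlMr // mulrC.
Qed.

Lemma P_supp (R : realType) (X : normedModType R) (u w : X) (sg : R) :
  `|u| + sg * dd u w <= `|u + sg *: w|.
Proof.
have [sg0|sg0|->] := ltgtP sg 0; last by rewrite mul0r scale0r !addr0.
- set D := `|u + sg *: w| - `|u|.
  have : D / sg <= dd u w.
    apply: lb_le_inf; first exact: qset_ne.
    move=> _ [s /= s0 <-].
    rewrite ler_ndivrMr // mulrAC ler_pdivrMr //.
    have := L2 u w sg0 s0; rewrite -/D; lra.
  rewrite ler_ndivrMr // mulrC; rewrite /D; lra.
- have := dd_le u w sg0; lra.
Qed.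

Lemma supp (R : realType) (X : normedModType R) (u w : X) (al be : R) :
  al * `|u| + be * dd u w <= `|al *: u + be *: w|.
Proof.
have pos : forall a b : R, 0 < a -> a * `|u| + b * dd u w <= `|a *: u + b *: w|.
  move=> a b a0.
  have e1 : a * (b / a) = b by rewrite mulrC divfK // gt_eqF.
  have -> : a *: u + b *: w = a *: (u + (b / a) *: w) by rewrite scalerDr scalerA e1.
  rewrite normrZ gtr0_norm //.
  have := P_supp u w (b / a) => H.
  have := ler_wpM2l (ltW a0) H; rewrite mulrDr mulrA e1 //.
set t := `|al| + 1.
have t0 : 0 < t by rewrite /t ltr_pwDr.
have at0 : 0 < al + t.
  have := ler_norm (- al); rewrite normrN /t; lra.
have := pos (al + t) be at0.
have -> : (al + t) *: u + be *: w = (al *: u + be *: w) + t *: u.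
  by rewrite scalerDl addrAC.
have := ler_normD (al *: u + be *: w) (t *: u); rewrite normrZ gtr0_norm //.
lra.
Qed.

Lemma napprox (R : realType) (X : normedModType R) (u w : X) (e : R) :
  0 < e -> exists2 s0, 0 < s0 & forall h, 0 < h <= s0 ->
     `|u + h *: w| <= `|u| + h * (dd u w + e).
Proof.
move=> e0.
have hi : has_inf (qset u w) by split; [exact: qset_ne | exists (- `|w|); exact: qset_lb].
have [_ [s0 /= s00 <-] hq] := inf_adherent e0 hi.
exists s0 => // h /andP[h0 hs].
set q := (`|u + s0 *: w| - `|u|) / s0 in hq.
have qA : `|u + s0 *: w| - `|u| = q * s0 by rewrite /q divfK // gt_eqF.
have := L1 u w h0 hs; rewrite qA => H1.
have H2 : h * (q * s0) <= h * ((dd u w + e) * s0).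
  apply: ler_wpM2l; first exact: ltW. apply: ler_wpM2r; [exact: ltW | exact: ltW].
have : s0 * (`|u + h *: w| - `|u| - h * (dd u w + e)) <= 0 by lra.
rewrite pmulr_rle0 //; lra.
Qed.

Lemma linT (R : realType) (X Y : normedModType R) (T : X -> Y) :
  is_linear_fun T ->
  [/\ T 0 = 0, (forall x y, T (x + y) = T x + T y) & (forall (a : R) x, T (a *: x) = a *: T x)].
Proof.
move=> hl.
have T0 : T 0 = 0.
  have := hl 1 0 0; rewrite !scale1r addr0 => /(congr1 (fun z => z - T 0)).
  by rewrite subrr addrK => <-.
split => //.
- by move=> x y; have := hl 1 x y; rewrite !scale1r.
- by move=> a x; have := hl a x 0; rewrite !addr0 T0 addr0.
Qed.

Lemma scale_comb (R : realType) (X : normedModType R) (u w : X) (k x y : R) :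
  k *: (x *: u + y *: w) = (k * x) *: u + (k * y) *: w.
Proof. by rewrite scalerDr !scalerA. Qed.

Lemma key (R : realType) (X : normedModType R) (T : X -> X) (u w : X) :
  is_linear_fun T -> 0 < `|u| -> preserves_BJ_at T u ->
  forall e, 0 < e -> exists2 dl, 0 < dl & forall h, 0 < h < dl ->
   `|T u| / `|u| - e * h <= `|T (u + h *: w)| / `|u + h *: w|.
Proof.
move=> hl N0 hp e e0.
have [T0 TD TZ] := linT hl.
set N := `|u| in N0 *.
set d := dd u w.
set a := d / N.
set r := `|T u| / N.
have aN : a * N = d by rewrite /a divfK // gt_eqF.
have rN : r * N = `|T u| by rewrite /r divfK // gt_eqF.
have r0 : 0 <= r by rewrite /r divr_ge0 // ltW.
have I1 : forall l : R, u + l *: (w - a *: u) = (1 - l * a) *: u + l *: w.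
  move=> l; rewrite scalerBr scalerA scalerBl scale1r.
  by rewrite addrCA addrC.
have orth : BJ_orth u (w - a *: u).
  move=> l; rewrite I1; have := supp u w (1 - l * a) l; rewrite -/d -/N.
  have : l * a * N = l * d by rewrite -mulrA aN.
  lra.
have Morth := hp _ orth.
have Mb : forall h, 0 < h -> r * (N + h * d) <= `|T (u + h *: w)|.
  move=> h h0; set k := 1 + h * a.
  have kN : N + h * d = k * N by rewrite /k -aN; ring.
  rewrite kN.
  have [k0|k0] := ltP 0 k; last first.
    apply: le_trans (normr_ge0 _); rewrite mulr_ge0_le0 //.
    nra.
  set l := h / k.
  have kl : k * l = h by rewrite /l mulrC divfK // gt_eqF.
  have E : u + h *: w = k *: (u + l *: (w - a *: u)).
    rewrite I1 scale_comb kl; congr (_ + _).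
    rewrite -[LHS]scale1r; congr (_ *: _).
    by rewrite mulrBr mulr1 mulrA kl /k; ring.
  rewrite E TZ normrZ gtr0_norm // TD TZ.
  have := Morth l; rewrite mulrCA rN => H.
  by rewrite ler_wpM2l // ltW.
set eps := e * N / (2 * (r + 1)).
have r1 : 0 < r + 1 by lra.
have eps0 : 0 < eps by rewrite /eps divr_gt0 ?mulr_gt0 //.
have Feps : (r + 1) * eps = e * N / 2.
  by rewrite /eps; field; rewrite gt_eqF.
have [s0 s00 hs0] := napprox u w eps0.
have w1 : 0 < 2 * (`|w| + 1) by rewrite mulr_gt0 // ltr_pwDr.
exists (Num.min s0 (N / (2 * (`|w| + 1)))).
  by rewrite lt_min s00 divr_gt0.
move=> h /andP[h0]; rewrite lt_min => /andP[hs hN].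
have hN1 := hs0 h; rewrite h0 ltW //= in hN1; have {}hN1 := hN1 isT; rewrite -/N -/d in hN1.
have hN2 : N - h * `|w| <= `|u + h *: w|.
  have := ler_normB (u + h *: w) (h *: w); rewrite addrK normrZ gtr0_norm // -/N; lra.
have hw : h * (2 * (`|w| + 1)) < N by rewrite -ltr_pdivlMr.
have N'0 : N / 2 <= `|u + h *: w| by lra.
have N'p : 0 < `|u + h *: w| by lra.
rewrite ler_pdivlMr //.
have M1 := Mb h h0.
have F : r * (`|u + h *: w| - h * eps) <= r * (N + h * d).
  by apply: ler_wpM2l => //; lra.
have F2 : e * (N / 2) <= e * `|u + h *: w| by apply: ler_wpM2l => //; exact: ltW.
have F3 : r * eps <= e * `|u + h *: w| by lra.
have F4 : h * (r * eps) <= h * (e * `|u + h *: w|) by apply: ler_wpM2l => //; exact: ltW.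
lra.
Qed.
Lemma g_cont (R : realType) (X : normedModType R) (T : X -> X) (x w : X) (t : R) :
  continuous T -> x + t *: w != 0 ->
  {for t, continuous (fun s : R => `|T (x + s *: w)| / `|x + s *: w|)}.
Proof.
move=> hT hn.
have hp : (fun s : R => x + s *: w) @ t --> x + t *: w.
  apply: cvgD; first exact: cvg_cst.
  apply: cvgZ; [exact: cvg_id | exact: cvg_cst].
apply: cvgM.
  apply: cvg_norm. exact: (cvg_comp _ _ hp (hT _)).
apply: cvgV; first by rewrite normr_eq0.
exact: cvg_norm.
Qed.
Lemma cont_eps (R: realType) (g : R -> R) (x0 : R) : ({for x0, continuous g}) ->
  forall eps, 0 < eps -> exists2 d, 0 < d & forall t, `|x0 - t| < d -> `|g x0 - g t| < eps.
Proof.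
move=> /cvgrPdist_lt H eps he; have := H eps he; move/nbhs_ballP => [d /= d0 hd].
exists d => // t ht; apply: hd; by rewrite -ball_normE /=.
Qed.

Lemma mono (R : realType) (g : R -> R) :
  (forall t, 0 <= t <= 1 -> {for t, continuous g}) ->
  (forall t, 0 <= t < 1 -> forall e, 0 < e -> exists2 d, 0 < d &
       forall h, 0 < h < d -> g t - e * h <= g (t + h)) ->
  g 0 <= g 1.
Proof.
move=> hc hr; rewrite leNgt; apply/negP => h10.
set e := (g 0 - g 1) / 2.
have e0 : 0 < e by rewrite /e divr_gt0 // subr_gt0.
pose A := [set t : R | 0 <= t <= 1 /\ forall s, 0 <= s <= t -> g 0 - e * s <= g s].
have A0 : A 0.
  split; first by rewrite lexx ler01.
  move=> s /andP[s0 s0']; have -> : s = 0 by apply/eqP; rewrite eq_le s0 s0'.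
  by rewrite mulr0 subr0.
have ub1 : ubound A 1 by move=> t [/andP[_ ?] _].
have hs : has_sup A by split; [exists 0 | exists 1].
set s := sup A.
have s0 : 0 <= s by apply: sup_upper_bound.
have s1 : s <= 1 by apply: ge_sup => //; exists 0.
have cl1 : forall tau, 0 <= tau < s -> g 0 - e * tau <= g tau.
  move=> tau /andP[t0 ts].
  have st : 0 < s - tau by rewrite subr_gt0.
  have [t At ht] := sup_adherent st hs.
  case: At => _ Ht; apply: Ht; rewrite t0 /=.
  move: ht; rewrite -/s opprB addrC subrK => /ltW //.
have cl2 : g 0 - e * s <= g s.
  have [->|sp] := eqVneq s 0; first by rewrite mulr0 subr0.
  have spos : 0 < s by rewrite lt_neqAle eq_sym sp s0.
  rewrite leNgt; apply/negP => hlt.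
  have he' : 0 < g 0 - e * s - g s by rewrite subr_gt0.
  have hcs : {for s, continuous g} by apply: hc; rewrite s0 s1.
  have [d d0 hd] := @cont_eps _ g s hcs _ he'.
  set m := Num.min d s.
  have m0 : 0 < m by rewrite lt_min d0 spos.
  have := le_min m d s; rewrite lexx => /esym/andP[md ms].
  set tau := s - m / 2.
  have t0 : 0 <= tau by rewrite /tau; lra.
  have ts : tau < s by rewrite /tau; lra.
  have := cl1 tau; rewrite t0 ts => /(_ isT) hgt.
  have hstau : `|s - tau| < d by rewrite /tau opprB addrC subrK ger0_norm; lra.
  have := hd tau hstau; rewrite ltr_norml => /andP[h1 h2].
  have hee : e * tau <= e * s by rewrite ler_wpM2l // ltW.
  lra.
have As : A s.
  split; first by rewrite s0 s1.
  move=> sg /andP[sg0 sgs]; have [sgs'|sgs'|->] := ltgtP sg s.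
  - by apply: cl1; rewrite sg0 sgs'.
  - by move: sgs; rewrite leNgt sgs'.
  - exact: cl2.
have [s1'|s1'] := eqVneq s 1.
  move: cl2; rewrite s1' mulr1 /e; lra.
have slt1 : s < 1 by rewrite lt_neqAle s1' s1.
have [d d0 hd] : exists2 d, 0 < d & forall h, 0 < h < d -> g s - e * h <= g (s + h).
  by apply: hr; rewrite ?s0 ?slt1.

set m := Num.min d (1 - s).
have m0 : 0 < m by rewrite lt_min d0 subr_gt0 slt1.
have := le_min m d (1 - s); rewrite lexx => /esym/andP[md ms].
have Ash : A (s + m / 2).
  split; first by apply/andP; split; lra.
  move=> sg /andP[sg0 sgs]; have [sgs'|sgs'] := leP sg s.
    by case: As => _ H; apply: H; rewrite sg0 sgs'.
  have hh : 0 < sg - s < d by apply/andP; split; lra.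
  have := hd _ hh; rewrite (addrC s) subrK => H2.
  have : e * sg = e * s + e * (sg - s) by rewrite mulrBr addrC subrK.
  lra.
have := sup_upper_bound hs Ash; rewrite -/s; lra.
Qed.

Lemma orth_scale (R : realType) (X : normedModType R) (x v : X) (k : R) :
  k != 0 -> BJ_orth x v -> BJ_orth (k *: x) v.
Proof.
move=> k0 ho l.
have -> : k *: x + l *: v = k *: (x + (l / k) *: v).
  by rewrite scalerDr scalerA mulrC divfK.
rewrite !normrZ; apply: ler_wpM2l => //; exact: ho.
Qed.

Lemma orth_unscale (R : realType) (X : normedModType R) (x v : X) (k : R) :
  k != 0 -> BJ_orth (k *: x) v -> BJ_orth x v.
Proof.
move=> k0 ho; have := orth_scale (invr_neq0 k0) ho.
by rewrite scalerA mulVf // scale1r.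
Qed.

Lemma phi_lin (R : realType) (X : normedModType R) (phi : X -> R) :
  is_linear_fun (phi : X -> R^o) ->
  [/\ phi 0 = 0, (forall x y, phi (x + y) = phi x + phi y) &
      (forall (a : R) x, phi (a *: x) = a * phi x)].
Proof. by move=> hl; have [? ? hz] := linT hl. Qed.

Lemma presU (R : realType) (X : normedModType R) (phi : X -> R) (c : R) (T : X -> X) :
  is_linear_fun (phi : X -> R^o) -> is_linear_fun T -> c <> 0 ->
  (forall x, phi x = c -> preserves_BJ_at T x) ->
  forall x, phi x != 0 -> preserves_BJ_at T x.
Proof.
move=> hphi hl c0 hp x px.
have [_ _ pZ] := phi_lin hphi.
have [_ _ TZ] := linT hl.
set k := c / phi x.
have k0 : k != 0 by rewrite mulf_neq0 ?invr_neq0 //; apply/eqP.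
have pk : phi (k *: x) = c by rewrite pZ /k divfK.
move=> v hv; have := hp _ pk _ (orth_scale k0 hv).
rewrite TZ; exact: orth_unscale k0.
Qed.

Lemma seg (R : realType) (X : normedModType R) (phi : X -> R) (T : X -> X) (x y : X) :
  is_linear_fun (phi : X -> R^o) -> is_linear_fun T -> continuous T ->
  (forall z, phi z != 0 -> preserves_BJ_at T z) -> 0 < phi x * phi y ->
  `|T x| / `|x| <= `|T y| / `|y|.
Proof.
move=> hphi hl hc hp hxy.
have [p0 pD pZ] := phi_lin hphi.
set w := y - x.
pose g t := `|T (x + t *: w)| / `|x + t *: w|.
have pz : forall t, phi (x + t *: w) = phi x + t * (phi y - phi x).
  by move=> t; rewrite pD pZ /w pD -scaleN1r pZ mulN1r.
have px : phi x != 0 by apply: contraTneq hxy => ->; rewrite mul0r ltxx.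
have px2 : 0 < phi x * phi x by rewrite -expr2 exprn_even_gt0 // px orbT.
have nz : forall t, 0 <= t <= 1 -> phi (x + t *: w) != 0.
  move=> t /andP[t0 t1]; rewrite pz.
  have : 0 < phi x * (phi x + t * (phi y - phi x)).
    have [tl|tl] := ltP t 1.
      have h1 : 0 < (1 - t) * (phi x * phi x) by rewrite mulr_gt0 // subr_gt0.
      have h2 : 0 <= t * (phi x * phi y) by rewrite mulr_ge0 // ltW.
      lra.
    have -> : t = 1 by apply/eqP; rewrite eq_le t1 tl.
    lra.
  by apply: contraTneq => ->; rewrite mulr0 ltxx.
have zn : forall t, 0 <= t <= 1 -> x + t *: w != 0.
  by move=> t ht; apply: contra_neq (nz t ht) => ->.
have g0 : g 0 = `|T x| / `|x| by rewrite /g scale0r addr0.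
have g1 : g 1 = `|T y| / `|y| by rewrite /g scale1r /w addrC subrK.
rewrite -g0 -g1; apply: mono.
  move=> t ht; exact: g_cont hc (zn t ht).
move=> t /andP[t0 t1] e e0.
have ht : 0 <= t <= 1 by rewrite t0 ltW.
have un : 0 < `|x + t *: w| by rewrite normr_gt0 zn.
have [dl dl0 hd] := key w hl un (hp _ (nz t ht)) e0.
exists dl => // h hh; have := hd h hh.
by rewrite /g scalerDl addrA.
Qed.

Theorem mainTheorem8 (R : realType) (X : completeNormedModType R)
  (phi : X -> R) (c : R) (T : X -> X) :
  Gdelta (Sm X) -> dense (Sm X) ->
  bounded_linear (phi : X -> R^o) -> (exists x : X, phi x <> 0) -> c <> 0 ->
  bounded_linear T ->
  (forall x : X, phi x = c -> preserves_BJ_at T x) ->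
  scalar_mult_isometry T.
Proof.
move=> _ _ [hphi _] [z0 pz0] c0 [hl hc] hp.
have hpU := presU hphi hl c0 hp.
have [p0 pD pZ] := phi_lin hphi.
have [T0 TD TZ] := linT hl.
have TN : forall z, T (- z) = - T z by move=> z; rewrite -scaleN1r TZ scaleN1r.
have pN : forall z, phi (- z) = - phi z by move=> z; rewrite -scaleN1r pZ mulN1r.
have pz0' : phi z0 != 0 by apply/eqP.
have rc : forall x, phi x != 0 -> `|T x| / `|x| = `|T z0| / `|z0|.
  move=> x px.
  have [hpos|hneg] := ltP 0 (phi x * phi z0).
    apply/eqP; rewrite eq_le (seg hphi hl hc hpU hpos) /=.
    by apply: (seg hphi hl hc hpU); rewrite mulrC.
  have hneg' : 0 < phi (- x) * phi z0.
    rewrite pN mulNr oppr_gt0 lt_neqAle hneg andbT.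
    by rewrite mulf_neq0.
  have e1 : `|T (- x)| / `|- x| = `|T x| / `|x| by rewrite TN !normrN.
  rewrite -e1; apply/eqP; rewrite eq_le (seg hphi hl hc hpU hneg') /=.
  by apply: (seg hphi hl hc hpU); rewrite mulrC.
set lam := `|T z0| / `|z0|.
have lam0 : 0 <= lam by rewrite /lam divr_ge0.
have hU : forall x, phi x != 0 -> `|T x| = lam * `|x|.
  move=> x px; have xn : `|x| != 0.
    by rewrite normr_eq0; apply: contra_neq px => ->.
  by rewrite /lam -(rc x px) divfK.
exists lam; split => // x.
have [px|px] := eqVneq (phi x) 0; last exact: hU.
set C := `|T z0| + lam * `|z0|.
have C0 : 0 <= C by rewrite /C addr_ge0 // mulr_ge0.
have bnd : forall e, 0 < e ->
    `|T x| <= lam * `|x| + e * C /\ lam * `|x| <= `|T x| + e * C.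
  move=> e e0.
  have pe : phi (x + e *: z0) != 0 by rewrite pD pZ px add0r mulf_neq0 // gt_eqF.
  have H := hU _ pe.
  have E1 : T (x + e *: z0) = T x + e *: T z0 by rewrite TD TZ.
  have n1 : `|T x| <= `|T (x + e *: z0)| + e * `|T z0|.
    have := ler_normB (T (x + e *: z0)) (e *: T z0).
    by rewrite E1 addrK normrZ gtr0_norm.
  have n2 : `|x + e *: z0| <= `|x| + e * `|z0|.
    by have := ler_normD x (e *: z0); rewrite normrZ gtr0_norm.
  have n3 : `|x| <= `|x + e *: z0| + e * `|z0|.
    by have := ler_normB (x + e *: z0) (e *: z0); rewrite addrK normrZ gtr0_norm.
  have n4 : `|T (x + e *: z0)| <= `|T x| + e * `|T z0|.
    by have := ler_normD (T x) (e *: T z0); rewrite -E1 normrZ gtr0_norm.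
  have m2 := ler_wpM2l lam0 n2.
  have m3 := ler_wpM2l lam0 n3.
  rewrite /C; split; lra.
apply/eqP; rewrite eq_le; apply/andP; split; apply/ler_addgt0Pr => e e0.
  have e1 : 0 < e / (C + 1) by rewrite divr_gt0 // ltr_pwDr.
  have [h1 _] := bnd _ e1.
  have : e / (C + 1) * C <= e.
    rewrite mulrAC ler_pdivrMr ?ltr_pwDr //; nra.
  lra.
have e1 : 0 < e / (C + 1) by rewrite divr_gt0 // ltr_pwDr.
have [_ h1] := bnd _ e1.
have : e / (C + 1) * C <= e.
  rewrite mulrAC ler_pdivrMr ?ltr_pwDr //; nra.
lra.
Qed.
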